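(* Let $d$ be a prime, $n,N_1,N_2\in\mathbb{N}$, $\omega\in\mathbb{C}$ a primitive $d$-th root of unity, and $W_1,W_2\in M_n(\mathbb{Z}_d)$. For $i=1,2$ let $\mu_i:\mathcal{G}_d^n(W_i)\to GL(\mathbb{C}^{N_i})$, $\mu_i(a,p,x)=a\,\omega^p\,\tau_i(x)$, be a polar commutator representation. If $\Omega_i=W_i-W_i^T$ has full rank over $\mathbb{Z}_d$ for $i=1,2$, then there exists a group isomorphism $\phi:\mathcal{G}_d^n(W_1)\to\mathcal{G}_d^n(W_2)$. Furthermore, if $\phi$ is such an isomorphism, the representations $\mu_1$ and $\mu_2\circ\phi$ have the same character, and there exists a set $B\subseteq\mathcal{G}_d^n(W_1)$ such that $\mu_1(B)$ is a set of Hermitian (respectively unitary) matrices spanning the complex vector space $M_{N_1}(\mathbb{C})$ and $\mu_2(\phi(g))$ is Hermitian (respectively unitary) for all $g\in B$, then $N_1=N_2=:N$ and there exists a unitary $S\in U(N)$ with $\mu_2(\phi(g))=S\mu_1(g)S^{-1}$ for all $g\in\mathcal{G}_d^n(W_1)$.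
   Context: Let $F\subset\mathbb{C}^\times$ be a fixed set of representatives of the quotient $\mathbb{C}^\times/\langle\omega\rangle$ with $1\in F$, and let $r:\mathbb{C}^\times\to F$, $u:\mathbb{C}^\times\to\mathbb{Z}_d$ be such that $a=r(a)\,\omega^{u(a)}$ for all $a\in\mathbb{C}^\times$. For $W\in M_n(\mathbb{Z}_d)$, the polar commutator group $\mathcal{G}_d^n(W)$ is the set $F\times\mathbb{Z}_d\times\mathbb{Z}_d^n$ with multiplication $(a,p,x)\cdot(b,q,y)=(r(ab),\,u(ab)+p+q+x^TWy,\,x+y)$. A polar commutator representation of $\mathcal{G}_d^n(W)$ in $\mathbb{C}^N$ is a map $\mu(a,p,x)=a\,\omega^p\,\tau(x)$, where $\tau:\mathbb{Z}_d^n\to GL(\mathbb{C}^N)$ is such that $\mu$ is an injective group homomorphism. The character of a representation is its trace. *)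

(* Defs.v *)
From HB Require Import structures.
From mathcomp Require Import all_boot all_order all_algebra.
From mathcomp Require Import reals complex.
Set Implicit Arguments. Unset Strict Implicit. Unset Printing Implicit Defensive.
Import Order.TTheory GRing.Theory Num.Theory.
Local Open Scope ring_scope.
Local Open Scope complex_scope.

(* Polar data: the fixed set of representatives F of C^x / <w>, with 1 \in F,
   and the maps r : C^x -> F, u : C^x -> Z_d with a = r(a) w^(u(a)).
   (r and u are given on all of C; their values at 0 are never used,
   r is only required to land in F there.) *)
Record polar_data (R : realType) (d : nat) (w : R[i]) := PolarData {
  pF : pred R[i];
  pr : R[i] -> R[i];
  pu : R[i] -> 'F_d;
  pF1 : 1 \in pF;
  pF_neq0 : forall a, a \in pF -> a != 0;
  pF_cover : forall a, a != 0 -> exists f (k : nat), f \in pF /\ a = f * w ^+ k;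
  pF_disj : forall f g (k : nat), f \in pF -> g \in pF -> f = g * w ^+ k -> f = g;
  pr_in : forall a, pr a \in pF;
  pru : forall a, a != 0 -> a = pr a * w ^+ (nat_of_ord (pu a))
}.

Section PolarGroup.
Variables (R : realType) (d : nat) (w : R[i]) (P : polar_data d w) (n : nat).

Definition Fset := {a : R[i] | a \in pF P}.

Definition gelem := (Fset * 'F_d * 'cV['F_d]_n)%type.

Definition gmul (W : 'M['F_d]_n) (g h : gelem) : gelem :=
  let: (a, p, x) := g in
  let: (b, q, y) := h in
  (exist (fun c => c \in pF P) (pr P (sval a * sval b)) (pr_in P _),
   pu P (sval a * sval b) + p + q + (x^T *m W *m y) 0 0,
   x + y).

Definition group_iso (W1 W2 : 'M['F_d]_n) (phi : gelem -> gelem) :=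
  bijective phi /\ forall g h, phi (gmul W1 g h) = gmul W2 (phi g) (phi h).

Definition polar_mu (N : nat) (tau : 'cV['F_d]_n -> 'M[R[i]]_N) (g : gelem)
  : 'M[R[i]]_N :=
  let: (a, p, x) := g in (sval a * w ^+ (nat_of_ord p)) *: tau x.

Definition polar_rep (W : 'M['F_d]_n) (N : nat)
    (tau : 'cV['F_d]_n -> 'M[R[i]]_N) :=
  [/\ forall x, tau x \in unitmx,
      injective (polar_mu tau) &
      forall g h, polar_mu tau (gmul W g h) = polar_mu tau g *m polar_mu tau h].

End PolarGroup.

Definition adjmx (R : realType) m k (M : 'M[R[i]]_(m, k)) : 'M[R[i]]_(k, m) :=
  (map_mx Num.conj M)^T.
Definition hermitian_mx (R : realType) N (M : 'M[R[i]]_N) := adjmx M = M.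
Definition unitary_mx (R : realType) N (M : 'M[R[i]]_N) :=
  M *m adjmx M = 1%:M /\ adjmx M *m M = 1%:M.

Definition spans_mx (R : realType) N (T : Type) (B : T -> Prop)
    (f : T -> 'M[R[i]]_N) :=
  forall M : 'M[R[i]]_N, exists (k : nat) (g : 'I_k -> T) (c : 'I_k -> R[i]),
    (forall i, B (g i)) /\ M = \sum_(i < k) c i *: f (g i).

(* Main.v *)
Require Import Defs.
From HB Require Import structures.
From mathcomp Require Import all_boot all_order all_algebra all_fingroup.
From mathcomp Require Import reals complex ring.
Set Implicit Arguments. Unset Strict Implicit. Unset Printing Implicit Defensive.
Import Order.TTheory GRing.Theory Num.Theory.
Local Open Scope ring_scope.

Section Symp.
Variable F : fieldType.
Definition altm n (O : 'M[F]_n) := exists U : 'M[F]_n, O = U - U^T.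

Lemma altm_diag n (O : 'M[F]_n) i : altm O -> O i i = 0.
Proof. by case=> U ->; rewrite !mxE subrr. Qed.
Lemma altm_anti n (O : 'M[F]_n) i j : altm O -> O j i = - O i j.
Proof. by case=> U ->; rewrite !mxE opprB. Qed.
Lemma altm_congr n m (O : 'M[F]_n) (P : 'M[F]_(n, m)) : altm O -> altm (P^T *m O *m P).
Proof.
case=> U ->; exists (P^T *m U *m P).
by rewrite mulmxBr mulmxBl !trmx_mul trmxK mulmxA.
Qed.

Definition J2 : 'M[F]_2 := \matrix_(i, j)
  (if (i == 0) && (j == 1) then 1 else if (i == 1) && (j == 0) then -1 else 0).
Fixpoint Jm n : 'M[F]_n := match n return 'M[F]_n with
 | n'.+2 => block_mx J2 0 0 (Jm n')
 | _ => 0 end.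

Lemma exists_nz n (O : 'M[F]_n.+1) : O \in unitmx -> exists a c, O a c != 0.
Proof.
move=> U; case: (boolP [exists a, exists c, O a c != 0]).
  by case/existsP=> a /existsP [c H]; exists a, c.
rewrite negb_exists => /forallP H.
have O0 : O = 0.
  apply/matrixP=> a c; rewrite mxE; move: (H a); rewrite negb_exists => /forallP /(_ c).
  by rewrite negbK => /eqP.
by move: U; rewrite O0 unitmxE det0 unitr0.
Qed.

Lemma perm2 m (a c i0 i1 : 'I_m) : a != c -> i0 != i1 ->
  exists t : {perm 'I_m}, t i0 = a /\ t i1 = c.
Proof.
move=> ac i01; set c' := tperm i0 a c.
exists (tperm i1 c' * tperm i0 a)%g; rewrite !permM; split.
  rewrite (tpermD (x:=i1)) ?tpermL //; first by rewrite eq_sym.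
  apply/eqP=> E; move: ac; rewrite -(tpermK i0 a c) -/c' -E tpermL eqxx //.
by rewrite tpermL /c' tpermK.
Qed.

Lemma perm_congr m (O : 'M[F]_m) (t : {perm 'I_m}) i j :
  ((perm_mx (t^-1)%g)^T *m O *m perm_mx (t^-1)%g) i j = O (t i) (t j).
Proof. by rewrite tr_perm_mx invgK -row_permE -col_permE !mxE. Qed.


Lemma sum2 (V : nmodType) (f : 'I_2 -> V) : \sum_(k < 2) f k = f 0 + f 1.
Proof. by rewrite big_ord_recl big_ord1; congr (_ + f _); apply: val_inj. Qed.
Lemma ord2P (i : 'I_2) : i = 0 \/ i = 1.
Proof. by case: i => [[|[|//]]] Hi; [left|right]; apply: val_inj. Qed.

Lemma altm_dl m1 m2 (X : 'M[F]_(m1 + m2)) : altm X -> ursubmx X = 0 -> dlsubmx X = 0.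
Proof.
move=> aX urX; apply/matrixP=> i j; rewrite !mxE (altm_anti _ _ aX).
by have := congr1 (fun M : 'M[F]_(m1, m2) => M j i) urX; rewrite !mxE => ->; rewrite oppr0.
Qed.

Lemma symp_step0 n (O : 'M[F]_(2 + n)) : altm O ->
  O (lshift n 0) (lshift n 1) != 0 ->
  exists P : 'M[F]_(2 + n), exists O' : 'M[F]_n,
    [/\ P \in unitmx, P^T *m O *m P = block_mx J2 0 0 O' & altm O'].
Proof.
move=> aO.
set w := O _ _ => wnz.
set A := ulsubmx O; set B := ursubmx O.
have A00 : O (lshift n 0) (lshift n 0) = 0 by rewrite (altm_diag _ aO).
have A11 : O (lshift n 1) (lshift n 1) = 0 by rewrite (altm_diag _ aO).
have A01 : O (lshift n 0) (lshift n 1) = w by [].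
have A10 : O (lshift n 1) (lshift n 0) = - w by rewrite (altm_anti _ _ aO).
pose Ai : 'M[F]_2 := \matrix_(i, j)
  (if (i == 0) && (j == 1) then - w^-1 else if (i == 1) && (j == 0) then w^-1 else 0).
have AAi : A *m Ai = 1%:M.
  apply/matrixP=> i j; rewrite !mxE sum2 !mxE.
  by case: (ord2P i) => ->; case: (ord2P j) => -> /=;
  rewrite ?A00 ?A11 ?A01 ?A10 /= ?mulr0n ?mulr1n; field.
pose E : 'M[F]_2 := diag_mx (\row_(i < 2) if i == 0 then 1 else w^-1).
pose C : 'M[F]_(2, n) := - (Ai *m B).
pose P : 'M[F]_(2 + n) := block_mx E C 0 1%:M.
have uP : P \in unitmx.
  rewrite unitmxE det_ublock det1 mulr1 det_diag unitfE.
  rewrite !big_ord_recl big_ord0 !mxE /= mulr1 mul1r invr_eq0 //.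
have aX := altm_congr P aO.
set X := P^T *m O *m P in aX.
have ulX : ulsubmx X = J2.
  rewrite /X /P -[O]submxK tr_block_mx !mulmx_block block_mxKul.
  rewrite !trmx0 !mul0mx !mulmx0 !addr0 -/A.
  apply/matrixP=> i j; rewrite !mxE sum2 !mxE !sum2 !mxE.
  by case: (ord2P i) => ->; case: (ord2P j) => -> /=;
  rewrite ?A00 ?A11 ?A01 ?A10 /= ?mulr0n ?mulr1n; field.
have urX : ursubmx X = 0.
  rewrite /X /P -[O]submxK tr_block_mx !mulmx_block block_mxKur.
  rewrite !trmx0 !mul0mx ?mulmx0 ?addr0 -/A -/B /C mulmx1 mulmxN -!mulmxA (mulmxA A) AAi mul1mx.
  by rewrite addNr.
have dlX : dlsubmx X = 0.
  exact: altm_dl aX urX.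
exists P, (drsubmx X); split => //.
  by rewrite -/X -{1}(submxK X) ulX urX dlX.
case: aX => U eU; exists (drsubmx U).
by apply/matrixP=> i j; rewrite eU !mxE.
Qed.

Lemma symp_step n (O : 'M[F]_(2 + n)) : altm O -> O \in unitmx ->
  exists P : 'M[F]_(2 + n), exists O' : 'M[F]_n,
    [/\ P \in unitmx, P^T *m O *m P = block_mx J2 0 0 O' & altm O'].
Proof.
move=> aO uO.
have [a [c nz]] := exists_nz uO.
have ac : a != c by apply: contraNneq nz => ->; rewrite (altm_diag _ aO).
have i01 : lshift n (0 : 'I_2) != lshift n 1 by [].
have [t [t0 t1]] := perm2 ac i01.
pose Q : 'M[F]_(2 + n) := perm_mx (t^-1)%g.
have aO1 := altm_congr Q aO.
have [P [O' [uP eP aO']]] : exists P : 'M[F]_(2 + n), exists O' : 'M[F]_n,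
    [/\ P \in unitmx, P^T *m (Q^T *m O *m Q) *m P = block_mx J2 0 0 O' & altm O'].
  by apply: symp_step0 => //; rewrite perm_congr t0 t1.
exists (Q *m P), O'; split => //.
  by rewrite unitmx_mul uP unitmx_perm.
by rewrite trmx_mul !mulmxA -eP !mulmxA.
Qed.

Lemma unitmx_block_diag n1 n2 (A : 'M[F]_n1) (B : 'M[F]_(n1, n2)) (D : 'M[F]_n2) :
  (block_mx A B 0 D \in unitmx) = (A \in unitmx) && (D \in unitmx).
Proof. by rewrite !unitmxE det_ublock unitrM. Qed.

Lemma symp_canon_aux n : (forall O : 'M[F]_n, altm O -> O \in unitmx ->
     exists P, P \in unitmx /\ P^T *m O *m P = Jm n) /\
  (forall O : 'M[F]_n.+1, altm O -> O \in unitmx ->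
     exists P, P \in unitmx /\ P^T *m O *m P = Jm n.+1).
Proof.
elim: n => [|n [IH0 IH1]].
  split.
    move=> O _ _; exists 1%:M; split; first exact: unitmx1.
    by rewrite !flatmx0.
  move=> O aO uO; exfalso.
  have O0 : O = 0.
    apply/matrixP=> i j; rewrite (ord1 i) (ord1 j) mxE.
    exact: (altm_diag _ aO).
  by move: uO; rewrite O0 unitmxE det0 unitr0.
split; first exact: IH1.
move=> O aO uO.
have [P [O' [uP eP aO']]] := symp_step aO uO.
have uO' : O' \in unitmx.
  have : P^T *m O *m P \in unitmx by rewrite !unitmx_mul unitmx_tr uP uO.
  by rewrite eP (unitmx_block_diag J2 0 O') => /andP[].
have [Q [uQ eQ]] := IH0 O' aO' uO'.
exists (P *m block_mx 1%:M 0 0 Q); split.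
  by rewrite unitmx_mul uP (unitmx_block_diag (1%:M : 'M[F]_2) 0 Q) unitmx1 uQ.
set B := block_mx (1%:M : 'M[F]_2) 0 0 Q.
have -> : (P *m B)^T *m O *m (P *m B) = B^T *m (P^T *m O *m P) *m B.
  by rewrite trmx_mul !mulmxA.
rewrite eP /B (tr_block_mx (1%:M : 'M[F]_2) 0 0 Q) !trmx0 trmx1 !mulmx_block.
rewrite !mul1mx !mulmx1 !mul0mx !mulmx0 !addr0 !add0r eQ.
by rewrite mul0mx.

Qed.

Lemma symp_canon n (O : 'M[F]_n) : altm O -> O \in unitmx ->
  exists P, P \in unitmx /\ P^T *m O *m P = Jm n.
Proof. exact: (symp_canon_aux n).1. Qed.

Lemma symp_congr n (O1 O2 : 'M[F]_n) : altm O1 -> O1 \in unitmx ->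
  altm O2 -> O2 \in unitmx ->
  exists A, A \in unitmx /\ A^T *m O2 *m A = O1.
Proof.
move=> a1 u1 a2 u2.
have [P1 [uP1 e1]] := symp_canon a1 u1.
have [P2 [uP2 e2]] := symp_canon a2 u2.
exists (P2 *m invmx P1); split; first by rewrite unitmx_mul uP2 unitmx_inv.
have -> : (P2 *m invmx P1)^T *m O2 *m (P2 *m invmx P1)
   = (invmx P1)^T *m (P2^T *m O2 *m P2) *m invmx P1 by rewrite trmx_mul !mulmxA.
rewrite e2 -e1 trmx_inv !mulmxA mulVmx ?unitmx_tr // mul1mx -mulmxA mulmxV // mulmx1.
done.
Qed.
End Symp.

Section Grp.
Variables (R : realType) (d : nat) (w : R[i]) (P : polar_data d w).
Hypothesis pd : prime d.
Hypothesis pw : d.-primitive_root w.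

Lemma val_Fp_add (a b : 'F_d) : nat_of_ord (a + b) = ((nat_of_ord a + nat_of_ord b) %% d)%N.
Proof. by rewrite /=; congr (_ %% _)%N; exact: Fp_cast. Qed.

Lemma val_Fp_lt (a : 'F_d) : (nat_of_ord a < d)%N.
Proof. by apply: leq_trans (ltn_ord a) _; rewrite Fp_cast. Qed.

Definition E (k : 'F_d) : R[i] := w ^+ (nat_of_ord k).

Lemma w_nz : w != 0.
Proof.
apply/eqP=> w0; have := prim_expr_order pw; rewrite w0 expr0n.
rewrite (gtn_eqF (prime_gt0 pd)) /= => /eqP; by rewrite eq_sym oner_eq0.
Qed.

Lemma E_nz k : E k != 0.
Proof. by rewrite /E expf_neq0 // w_nz. Qed.

Lemma E_add a b : E (a + b) = E a * E b.
Proof. by rewrite /E val_Fp_add prim_expr_mod // exprD. Qed.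

Lemma E0 : E 0 = 1.
Proof. by rewrite /E /= expr0. Qed.

Lemma E_inj a b : E a = E b -> a = b.
Proof.
move=> /eqP; rewrite /E (eq_prim_root_expr pw) !modn_small ?val_Fp_lt //.
by move=> /eqP /val_inj.
Qed.

Lemma E_sum I (r : seq I) (Q : pred I) (f : I -> 'F_d) :
  E (\sum_(i <- r | Q i) f i) = \prod_(i <- r | Q i) E (f i).
Proof. exact: (big_morph _ E_add E0). Qed.


Variable n : nat.
Definition gv (g : gelem P n) : R[i] := sval g.1.1 * E g.1.2.
Definition mkg (z : R[i]) (x : 'cV['F_d]_n) : gelem P n :=
  (exist (fun c => c \in pF P) (pr P z) (pr_in P z), pu P z, x).
Definition bil (W : 'M['F_d]_n) (x y : 'cV['F_d]_n) : 'F_d := (x^T *m W *m y) 0 0.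

Lemma pr_E z : z != 0 -> pr P z * E (pu P z) = z.
Proof. by move=> nz; rewrite /E -pru. Qed.

Lemma gv_mk z x : z != 0 -> gv (mkg z x) = z.
Proof. by move=> nz; rewrite /gv /= pr_E. Qed.

Lemma mk2 z x : (mkg z x).2 = x.
Proof. by []. Qed.

Lemma gv_nz (g : gelem P n) : gv g != 0.
Proof.
case: g => [[[a Ha] p] x]; rewrite /gv /= mulf_neq0 ?E_nz //.
exact: (pF_neq0 Ha).
Qed.

Lemma gv_mul (W : 'M['F_d]_n) (g h : gelem P n) : gv (@gmul _ _ _ P n W g h) = gv g * gv h * E (bil W g.2 h.2).
Proof.
case: g => [[[a Ha] p] x]; case: h => [[[b Hb] q] y].
rewrite /gmul /gv /bil /= !E_add.
rewrite mulrA mulrA mulrA pr_E; first by rewrite -!mulrA; congr (_ * _); rewrite mulrCA.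
by rewrite mulf_neq0 // (pF_neq0 Ha, pF_neq0 Hb).
Qed.

Lemma gmul2 (W : 'M['F_d]_n) (g h : gelem P n) : (@gmul _ _ _ P n W g h).2 = g.2 + h.2.
Proof. by case: g => [[a p] x]; case: h => [[b q] y]. Qed.

Lemma g_inj (g h : gelem P n) : gv g = gv h -> g.2 = h.2 -> g = h.
Proof.
case: g => [[[a Ha] p] x]; case: h => [[[b Hb] q] y]; rewrite /gv /= => e exy.
have ab : a = b.
  apply: (pF_disj (k := nat_of_ord (q - p)) Ha Hb).
  have : a * E p = b * E (q - p) * E p by rewrite -mulrA -E_add subrK.
  by move/(mulIf (E_nz p)).
subst b; have pq : p = q.
  apply: E_inj; apply: (mulfI (pF_neq0 Ha)); exact: e.
by subst; congr (_, _, _); apply: val_inj.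
Qed.


Lemma F2cases : (2%:R : 'F_d) == 0 -> forall x : 'F_d, x = 0 \/ x = 1.
Proof.
move=> /eqP h2 x.
have d2 : d = 2%N.
  have := congr1 (@nat_of_ord _) h2; rewrite val_Fp_nat //= => /eqP.
  rewrite -/(dvdn d 2) => dv.
  have := prime_gt1 pd; have := dvdn_leq (isT : (0 < 2)%N) dv.
  by case: (d) => [|[|[|k]]] // ; rewrite !ltnS leqn0.
move: (val_Fp_lt x); rewrite [X in (_ < X)%N -> _]d2.
case: x => [[|[|]] Hx] // _; [left|right]; apply: val_inj => //=.
Qed.

Definition gam (m x : 'F_d) : R[i] :=
  if (2%:R : 'F_d) == 0 then (if x == 0 then 1 else sqrtC (E m)^-1)
  else E (m * x * x / 2%:R).

Lemma gam_nz m a : gam m a != 0.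
Proof.
rewrite /gam; case: ifP => _; last exact: E_nz.
case: ifP => _; first exact: oner_neq0.
by rewrite sqrtC_eq0 invr_eq0 E_nz.
Qed.

Lemma gam_add m a b : gam m (a + b) = gam m a * gam m b * E (m * a * b).
Proof.
rewrite /gam; case: ifP => h2.
  have [->|->] := F2cases h2 a; first by rewrite add0r mulr0 mul0r E0 eqxx !mul1r mulr1.
  have [->|->] := F2cases h2 b; first by rewrite addr0 mulr0 E0 eqxx !mulr1.
  have -> : (1 + 1 : 'F_d) = 0 by apply/eqP; rewrite -(natrD _ 1 1).
  rewrite eqxx oner_eq0 !mulr1 -expr2 sqrtCK mulVf //; exact: E_nz.
rewrite -!E_add; congr E.
have h2' : (2%:R : 'F_d) != 0 by rewrite h2.
by field.
Qed.

Definition Umat (M : 'M['F_d]_n) : 'M['F_d]_n :=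
  \matrix_(i, j) if (i < j)%N then M i j else 0.

Definition cq (M : 'M['F_d]_n) (x : 'cV['F_d]_n) : R[i] :=
  E (bil (Umat M) x x) * \prod_i gam (M i i) (x i 0).

Lemma cq_nz M x : cq M x != 0.
Proof.
rewrite /cq mulf_neq0 ?E_nz //; rewrite prodf_seq_neq0; apply/allP=> i _.
exact: gam_nz.
Qed.

Lemma bil_expand W x y : bil W x y = \sum_i \sum_j x i 0 * W i j * y j 0.
Proof.
rewrite /bil mxE; under eq_bigr => j _ do rewrite mxE big_distrl.
rewrite exchange_big; apply: eq_bigr => i _; apply: eq_bigr => j _.
by rewrite !mxE.
Qed.

Lemma bil_addl W x y z : bil W (x + y) z = bil W x z + bil W y z.
Proof. by rewrite /bil linearD /= !mulmxDl mxE. Qed.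
Lemma bil_addr W x y z : bil W z (x + y) = bil W z x + bil W z y.
Proof. by rewrite /bil mulmxDr mxE. Qed.

Lemma bil_U M x y : M^T = M ->
  bil (Umat M) x y + bil (Umat M) y x + \sum_i M i i * x i 0 * y i 0 = bil M x y.
Proof.
move=> sM; rewrite !bil_expand.
rewrite [in X in _ + X + _]exchange_big /= -!big_split /=.
apply: eq_bigr => i _.
rewrite -big_split /= (bigD1 i) //= [in RHS](bigD1 i) //= !mxE ltnn.
rewrite !mulr0 !mul0r !add0r addrC; congr (_ + _); first by rewrite (mulrC (M i i)).
apply: eq_bigr => j ji; rewrite !mxE.
case: (ltngtP i j) => [ij|ji'|e]; last by move: ji; rewrite (val_inj e) eqxx.
  by rewrite mulr0 mul0r addr0.
rewrite mulr0 mul0r add0r.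
have -> : M j i = M i j by rewrite -{1}sM mxE.
ring.
Qed.

Lemma cq_add M x y : M^T = M -> cq M (x + y) = cq M x * cq M y * E (bil M x y).
Proof.
move=> sM; rewrite /cq -(bil_U x y sM).
rewrite bil_addl !bil_addr.
under eq_bigr => i _ do rewrite mxE gam_add.
rewrite !big_split /= -E_sum !E_add.
ring.
Qed.


Section Iso.
Variables (W1 W2 A : 'M['F_d]_n).
Hypothesis uA : A \in unitmx.
Hypothesis eA : A^T *m (W2 - W2^T) *m A = W1 - W1^T.

Let M := A^T *m W2 *m A - W1.

Lemma M_sym : M^T = M.
Proof.
move: eA; rewrite mulmxBr mulmxBl => e.
rewrite /M linearB /= !trmx_mul trmxK mulmxA.
set a := A^T *m W2 *m A; set b := A^T *m W2^T *m A.
have eb : b = a - (W1 - W1^T) by rewrite -e opprB addrC subrK.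
by rewrite eb opprB addrA addrAC addrK.
Qed.

Definition phiA (g : gelem P n) : gelem P n := mkg (gv g * cq M g.2) (A *m g.2).
Definition psiA (g : gelem P n) : gelem P n :=
  mkg (gv g / cq M (invmx A *m g.2)) (invmx A *m g.2).

Lemma phiA_gv g : gv (phiA g) = gv g * cq M g.2.
Proof. by rewrite gv_mk // mulf_neq0 ?gv_nz ?cq_nz. Qed.

Lemma phiA_hom g h : phiA (gmul W1 g h) = gmul W2 (phiA g) (phiA h).
Proof.
apply: g_inj; last by rewrite gmul2 /phiA !mk2 gmul2 mulmxDr.
rewrite phiA_gv !gv_mul !phiA_gv gmul2 cq_add ?M_sym //.
rewrite /phiA !mk2.
have -> : bil W2 (A *m g.2) (A *m h.2) = bil W1 g.2 h.2 + bil M g.2 h.2.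
  have sub00 (X Y : 'M['F_d]_1) : (X - Y) 0 0 = X 0 0 - Y 0 0 by rewrite !mxE.
  rewrite /bil /M mulmxBr mulmxBl trmx_mul !mulmxA sub00.
  by rewrite addrC subrK.
rewrite E_add; ring.
Qed.

Lemma phiA_iso : group_iso W1 W2 phiA.
Proof.
split; last exact: phiA_hom.
exists psiA => g.
  apply: g_inj; last by rewrite /psiA /phiA !mk2 mulKmx.
  rewrite /psiA gv_mk; last by rewrite mulf_neq0 ?gv_nz // invr_eq0 cq_nz.
  by rewrite phiA_gv /phiA mk2 mulKmx // mulfK // cq_nz.
apply: g_inj; last by rewrite /psiA /phiA !mk2 mulKVmx.
rewrite phiA_gv /psiA gv_mk; last by rewrite mulf_neq0 ?gv_nz // invr_eq0 cq_nz.
by rewrite mk2 divfK // cq_nz.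
Qed.
End Iso.

Lemma iso_exists (W1 W2 : 'M['F_d]_n) :
  \rank (W1 - W1^T) = n -> \rank (W2 - W2^T) = n ->
  exists phi : gelem P n -> gelem P n, group_iso W1 W2 phi.
Proof.
move=> r1 r2.
have u1 : W1 - W1^T \in unitmx by rewrite -row_free_unit /row_free r1.
have u2 : W2 - W2^T \in unitmx by rewrite -row_free_unit /row_free r2.
have [A [uA eA]] := symp_congr (ex_intro _ W1 erefl) u1 (ex_intro _ W2 erefl) u2.
by exists (phiA W1 W2 A); apply: phiA_iso.
Qed.

End Grp.

Section Adj.
Variable R : realType.
Local Notation C := R[i].

Lemma adjmxE m k (M : 'M[C]_(m, k)) i j : adjmx M i j = (M j i)^*.
Proof. by rewrite /adjmx !mxE. Qed.

Lemma adjmxD m k (A B : 'M[C]_(m, k)) : adjmx (A + B) = adjmx A + adjmx B.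
Proof. by apply/matrixP=> i j; rewrite !(mxE, adjmxE) rmorphD. Qed.

Lemma adjmxN m k (A : 'M[C]_(m, k)) : adjmx (- A) = - adjmx A.
Proof. by apply/matrixP=> i j; rewrite !(mxE, adjmxE) rmorphN. Qed.

Lemma adjmxB m k (A B : 'M[C]_(m, k)) : adjmx (A - B) = adjmx A - adjmx B.
Proof. by rewrite adjmxD adjmxN. Qed.

Lemma adjmxZ m k (a : C) (A : 'M[C]_(m, k)) : adjmx (a *: A) = a^* *: adjmx A.
Proof. by apply/matrixP=> i j; rewrite !(mxE, adjmxE) rmorphM. Qed.

Lemma adjmx0 m k : adjmx (0 : 'M[C]_(m, k)) = 0.
Proof. by apply/matrixP=> i j; rewrite !(mxE, adjmxE) rmorph0. Qed.

Lemma adjmx_sum m k I (r : seq I) (Q : pred I) (F : I -> 'M[C]_(m, k)) :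
  adjmx (\sum_(i <- r | Q i) F i) = \sum_(i <- r | Q i) adjmx (F i).
Proof. exact: (big_morph _ (@adjmxD m k) (@adjmx0 m k)). Qed.

Lemma adjmx_mul m k l (A : 'M[C]_(m, k)) (B : 'M[C]_(k, l)) :
  adjmx (A *m B) = adjmx B *m adjmx A.
Proof.
apply/matrixP=> i j; rewrite !(mxE, adjmxE) rmorph_sum.
by apply: eq_bigr => x _; rewrite !adjmxE rmorphM mulrC.
Qed.

Lemma adjmx1 m : adjmx (1%:M : 'M[C]_m) = 1%:M.
Proof.
by apply/matrixP=> i j; rewrite !(mxE, adjmxE) eq_sym rmorph_nat.
Qed.

Lemma adjmxK m k (A : 'M[C]_(m, k)) : adjmx (adjmx A) = A.
Proof. by apply/matrixP=> i j; rewrite !adjmxE conjCK. Qed.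

Lemma adjmx_inv m (S : 'M[C]_m) : S \in unitmx -> adjmx (invmx S) = invmx (adjmx S).
Proof.
move=> uS.
have h : adjmx (invmx S) *m adjmx S = 1%:M by rewrite -adjmx_mul mulmxV // adjmx1.
have uA : adjmx S \in unitmx by case: (mulmx1_unit h).
by rewrite -[LHS]mulmx1 -(mulmxV uA) mulmxA h mul1mx.
Qed.

Lemma tr_adj_eq0 m (X : 'M[C]_m) : \tr (adjmx X *m X) = 0 -> X = 0.
Proof.
rewrite /mxtrace => h.
have h2 : \sum_i \sum_k `|X k i| ^+ 2 = 0.
  rewrite -[RHS]h; apply: eq_bigr => i _; rewrite mxE; apply: eq_bigr => k _.
  by rewrite adjmxE normCK mulrC.
apply/matrixP=> k i; rewrite mxE.
have ge0 : forall k i, 0 <= `|X k i| ^+ 2 :> C by move=> k' i'; rewrite exprn_ge0.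
have hi : \sum_k `|X k i| ^+ 2 = 0.
  apply: (@psumr_eq0P _ _ _ _ _ h2 i) => // i' _; apply: sumr_ge0 => k' _; exact: ge0.
have := @psumr_eq0P _ _ _ _ (fun k _ => ge0 k i) hi k isT.
by move/eqP; rewrite expf_eq0 /= normr_eq0 => /eqP.
Qed.

Lemma delta_entry m (A : 'M[C]_m) (i j a b : 'I_m) :
  (A *m delta_mx i j) a b = A a i * (j == b)%:R.
Proof.
rewrite mxE (bigD1 i) //= big1 ?addr0; first by rewrite mxE eqxx /= eq_sym.
by move=> k ki; rewrite mxE (negbTE ki) mulr0.
Qed.

Lemma entry_delta m (A : 'M[C]_m) (i j a b : 'I_m) :
  (delta_mx i j *m A) a b = (a == i)%:R * A j b.
Proof.
rewrite mxE (bigD1 j) //= big1 ?addr0; first by rewrite mxE eqxx andbT.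
by move=> k kj; rewrite mxE (negbTE kj) andbF mul0r.
Qed.

Lemma comm_scalar m (P : 'M[C]_m.+1) :
  (forall i j, P *m delta_mx i j = delta_mx i j *m P) -> P = P 0 0 *: 1%:M.
Proof.
move=> h; apply/matrixP=> a b; rewrite !mxE.
have e0 : P 0 0 = P a a.
  have := congr1 (fun M : 'M[C]_m.+1 => M 0 a) (h 0 a).
  by rewrite delta_entry entry_delta !eqxx mulr1 mul1r.
case: eqP => [<-|/eqP ab]; first by rewrite mulr1 e0.
have := congr1 (fun M : 'M[C]_m.+1 => M b b) (h b a).
rewrite delta_entry entry_delta eqxx mul1r (negbTE ab) mulr0 => <-.
by rewrite mulr0.
Qed.
End Adj.

Section Core.
Variables (R : realType) (G : Type) (gm : G -> G -> G) (N : nat).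
Local Notation C := R[i].
Variables (r1 r2 : G -> 'M[C]_N.+1) (e : G) (B : G -> Prop).
Hypothesis hm1 : forall g h, r1 (gm g h) = r1 g *m r1 h.
Hypothesis hm2 : forall g h, r2 (gm g h) = r2 g *m r2 h.
Hypothesis he1 : r1 e = 1%:M.
Hypothesis he2 : r2 e = 1%:M.
Hypothesis htr : forall g, \tr (r1 g) = \tr (r2 g).

Definition ev (r : G -> 'M[C]_N.+1) (s : seq (C * G)) := \sum_(p <- s) p.1 *: r p.2.
Definition sp2 X := exists s, X = ev r2 s.
Definition Rel X1 X2 := forall h, \tr (r1 h *m X1) = \tr (r2 h *m X2).
Fixpoint allB (s : seq (C * G)) : Prop :=
  if s is p :: s' then B p.2 /\ allB s' else True.

Lemma tr_sum n I (r : seq I) (Q : pred I) (F : I -> 'M[C]_n) :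
  \tr (\sum_(i <- r | Q i) F i) = \sum_(i <- r | Q i) \tr (F i).
Proof. exact: (big_morph _ (@mxtraceD _ n) (@mxtrace0 _ n)). Qed.

Lemma ev_cons r p s : ev r (p :: s) = p.1 *: r p.2 + ev r s.
Proof. by rewrite /ev big_cons. Qed.
Lemma ev_nil r : ev r [::] = 0.
Proof. by rewrite /ev big_nil. Qed.
Lemma ev_cat r s t : ev r (s ++ t) = ev r s + ev r t.
Proof. by rewrite /ev big_cat. Qed.
Lemma ev_scale r a s : ev r [seq (a * p.1, p.2) | p <- s] = a *: ev r s.
Proof.
by rewrite /ev big_map scaler_sumr; apply: eq_bigr => p _; rewrite scalerA.
Qed.
Lemma ev_mul r (hm : forall g h, r (gm g h) = r g *m r h) s t :
  ev r s *m ev r t = ev r [seq (pq.1.1 * pq.2.1, gm pq.1.2 pq.2.2) | pq <- [seq (p, q) | p <- s, q <- t]].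
Proof.
rewrite /ev big_map big_allpairs mulmx_suml; apply: eq_bigr => p _.
rewrite mulmx_sumr; apply: eq_bigr => q _.
by rewrite /= hm -scalemxAl -scalemxAr scalerA.
Qed.

Lemma sp2_add X Y : sp2 X -> sp2 Y -> sp2 (X + Y).
Proof. by case=> s -> [t ->]; exists (s ++ t); rewrite ev_cat. Qed.
Lemma sp2_scale a X : sp2 X -> sp2 (a *: X).
Proof. by case=> s ->; exists [seq (a * p.1, p.2) | p <- s]; rewrite ev_scale. Qed.
Lemma sp2_mul X Y : sp2 X -> sp2 Y -> sp2 (X *m Y).
Proof. by case=> s -> [t ->]; eexists; rewrite ev_mul. Qed.
Lemma sp2_r g : sp2 (r2 g).
Proof. by exists [:: (1, g)]; rewrite ev_cons ev_nil addr0 scale1r. Qed.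
Lemma sp2_0 : sp2 0.
Proof. by exists [::]; rewrite ev_nil. Qed.
Lemma sp2_opp X : sp2 X -> sp2 (- X).
Proof. by move=> h; rewrite -scaleN1r; apply: sp2_scale. Qed.

Definition AD X := sp2 X /\ sp2 (adjmx X).
Lemma AD_add X Y : AD X -> AD Y -> AD (X + Y).
Proof. by case=> ? ? [? ?]; split; rewrite ?adjmxD; apply: sp2_add. Qed.
Lemma AD_scale a X : AD X -> AD (a *: X).
Proof. by case=> ? ?; split; rewrite ?adjmxZ; apply: sp2_scale. Qed.
Lemma AD_mul X Y : AD X -> AD Y -> AD (X *m Y).
Proof. by case=> ? ? [? ?]; split; rewrite ?adjmx_mul; apply: sp2_mul. Qed.
Lemma AD_sub X Y : AD X -> AD Y -> AD (X - Y).
Proof. by move=> hX hY; apply: AD_add => //; rewrite -scaleN1r; apply: AD_scale. Qed.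
Lemma AD_1 : AD 1%:M.
Proof. by split; rewrite ?adjmx1 -he2; apply: sp2_r. Qed.
Lemma AD_0 : AD 0.
Proof. by split; rewrite ?adjmx0; apply: sp2_0. Qed.
Lemma AD_sum I (r : seq I) (Q : pred I) (F : I -> 'M[C]_N.+1) :
  (forall i, Q i -> AD (F i)) -> AD (\sum_(i <- r | Q i) F i).
Proof. by move=> h; apply: big_ind => //; [exact: AD_0 | exact: AD_add]. Qed.

Hypothesis hadj : forall b, B b -> sp2 (adjmx (r2 b)).

Lemma AD_ev s : allB s -> AD (ev r2 s).
Proof.
elim: s => [|p s IH] /=; first by rewrite ev_nil => _; exact: AD_0.
case=> Bp /IH h; rewrite ev_cons; apply: AD_add => //; apply: AD_scale.
by split; [exact: sp2_r | exact: hadj].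
Qed.

Lemma Rel_r g : Rel (r1 g) (r2 g).
Proof. by move=> h; rewrite -hm1 -hm2 htr. Qed.
Lemma Rel_add X1 X2 Y1 Y2 : Rel X1 X2 -> Rel Y1 Y2 -> Rel (X1 + Y1) (X2 + Y2).
Proof. by move=> h1 h2 h; rewrite !mulmxDr !mxtraceD h1 h2. Qed.
Lemma Rel_scale a X1 X2 : Rel X1 X2 -> Rel (a *: X1) (a *: X2).
Proof. by move=> h1 h; rewrite -(scalemxAr a (r1 h) X1) -(scalemxAr a (r2 h) X2) !mxtraceZ h1. Qed.
Lemma Rel_sub X1 X2 Y1 Y2 : Rel X1 X2 -> Rel Y1 Y2 -> Rel (X1 - Y1) (X2 - Y2).
Proof.
by move=> h1 h2; apply: Rel_add => //; rewrite -(scaleN1r Y1) -(scaleN1r Y2); apply: Rel_scale.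
Qed.
Lemma Rel_0 : Rel 0 0.
Proof. by move=> h; rewrite !mulmx0. Qed.
Lemma Rel_sum I (r : seq I) (Q : pred I) (F1 F2 : I -> 'M[C]_N.+1) :
  (forall i, Q i -> Rel (F1 i) (F2 i)) ->
  Rel (\sum_(i <- r | Q i) F1 i) (\sum_(i <- r | Q i) F2 i).
Proof. by move=> h; apply: (big_ind2 Rel) => //; [exact: Rel_0 | exact: Rel_add]. Qed.
Lemma Rel_ev s : Rel (ev r1 s) (ev r2 s).
Proof. by apply: Rel_sum => p _; apply: Rel_scale; apply: Rel_r. Qed.
Lemma Rel_mulr X1 X2 t : Rel X1 X2 -> Rel (X1 *m ev r1 t) (X2 *m ev r2 t).
Proof.
move=> hX h; rewrite /ev !mulmx_sumr !tr_sum; apply: eq_bigr => q _.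
rewrite -!scalemxAr !mxtraceZ; congr (_ * _).
have key (r : G -> 'M[C]_N.+1) (hm : forall g h, r (gm g h) = r g *m r h) X :
    \tr (r h *m (X *m r q.2)) = \tr (r (gm q.2 h) *m X).
  by rewrite mulmxA mxtrace_mulC mulmxA hm.
by rewrite (key _ hm1) (key _ hm2) hX.
Qed.

Lemma tr_ev_Rel0 Y s : Rel 0 Y -> \tr (ev r2 s *m Y) = 0.
Proof.
move=> hY; rewrite /ev mulmx_suml tr_sum big1 // => p _.
by rewrite -scalemxAl mxtraceZ -hY mulmx0 mxtrace0 mulr0.
Qed.

Lemma Rel0_AD Y : Rel 0 Y -> AD Y -> Y = 0.
Proof.
move=> hY [_ [s hs]]; apply: tr_adj_eq0; rewrite hs; exact: tr_ev_Rel0.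
Qed.


Hypothesis hsp : spans_mx B r1.

Lemma allB_map k (c : 'I_k -> C) (g : 'I_k -> G) (l : seq 'I_k) :
  (forall i, B (g i)) -> allB [seq (c i, g i) | i <- l].
Proof. by move=> hB; elim: l => //= a l ->; split. Qed.

Lemma span_seq X : exists s, allB s /\ X = ev r1 s.
Proof.
have [k [g [c [hB ->]]]] := hsp X.
exists [seq (c i, g i) | i <- index_enum 'I_k]; split; first exact: allB_map.
by rewrite /ev big_map.
Qed.

Lemma core_conj : exists S, S \in unitmx /\ forall g, r2 g = S *m r1 g *m invmx S.
Proof.
have [s hs] : exists s : 'I_N.+1 * 'I_N.+1 -> seq (C * G),
    forall ij, allB (s ij) /\ delta_mx ij.1 ij.2 = ev r1 (s ij).
  apply: (@fin_all_exists _ (fun _ => seq (C * G)) (fun ij s => allB s /\ delta_mx ij.1 ij.2 = ev r1 s)) => ij; apply: span_seq.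
pose F i j := ev r2 (s (i, j)).
have RE i j : Rel (delta_mx i j) (F i j).
  by case: (hs (i, j)) => _ /= ->; apply: Rel_ev.
have ADF i j : AD (F i j) by apply: AD_ev; case: (hs (i, j)).
have FF i j k l : F i j *m F k l = (j == k)%:R *: F i l.
  apply/eqP; rewrite -subr_eq0; apply/eqP; apply: Rel0_AD.
    have := Rel_sub (Rel_mulr (s (k, l)) (RE i j)) (Rel_scale (j == k)%:R (RE i l)).
    by case: (hs (k, l)) => _ /= <-; rewrite mul_delta_mx_cond scaler_nat subrr.
  by apply: AD_sub; [apply: AD_mul | apply: AD_scale].
have sumF : \sum_i F i i = 1%:M.
  apply/eqP; rewrite -subr_eq0; apply/eqP; apply: Rel0_AD.
    have hR : Rel (\sum_i delta_mx i i) (\sum_i F i i) by apply: Rel_sum => i _; exact: RE.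
    have := Rel_sub hR (Rel_r e).
    by rewrite -mx1_sum_delta he1 he2 subrr.
  by apply: AD_sub; [apply: AD_sum => i _ | exact: AD_1].
have F00 : F 0 0 != 0.
  apply/eqP=> h0.
  have Fii i : F i i = 0.
    have e1 : F i i = F i 0 *m F 0 i by rewrite FF eqxx scale1r.
    have e2 : F i i = F i i *m F i i by rewrite FF eqxx scale1r.
    rewrite e2 e1 -!mulmxA (mulmxA (F 0 i)) FF eqxx scale1r h0.
    by rewrite mul0mx mulmx0.
  move: sumF; rewrite big1 // => h1.
  have := congr1 (fun M : 'M[C]_N.+1 => M 0 0) h1; rewrite !mxE /= => /eqP.
  by rewrite eq_sym oner_eq0.
have [m [k Fmk]] : exists m k, F 0 0 m k != 0.
  case: (boolP [exists m, exists k, F 0 0 m k != 0]).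
    by case/existsP=> m /existsP [k H]; exists m, k.
  rewrite negb_exists => /forallP H; case/eqP: F00.
  apply/matrixP=> a b; rewrite mxE; move: (H a); rewrite negb_exists => /forallP /(_ b).
  by rewrite negbK => /eqP.
pose S := \sum_j F j 0 *m delta_mx k j.
pose T := \sum_j delta_mx j m *m F 0 j.
have dXd (j : 'I_N.+1) (X : 'M[C]_N.+1) : delta_mx j m *m X *m delta_mx k j = X m k *: delta_mx j j.
  apply/matrixP=> a b; rewrite delta_entry entry_delta !mxE.
  by rewrite (eq_sym b); case: (a == j); case: (j == b); rewrite /= ?mulr1 ?mulr0 ?mul0r ?mul1r.
have TS : T *m S = F 0 0 m k *: 1%:M.
  rewrite mx1_sum_delta scaler_sumr /T mulmx_suml; apply: eq_bigr => j _.
  rewrite /S mulmx_sumr (bigD1 j) //= big1 ?addr0.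
    by rewrite mulmxA -(mulmxA _ (F 0 j)) FF eqxx scale1r dXd.
  move=> j' nj; rewrite mulmxA -(mulmxA _ (F 0 j)) FF.
  have -> : (j == j') = false by rewrite eq_sym; exact: negbTE.
  by rewrite scale0r mulmx0 mul0mx.
have uS : S \in unitmx.
  have : ((F 0 0 m k)^-1 *: T) *m S = 1%:M.
    by rewrite -scalemxAl TS scalerA mulVf // scale1r.
  by case/mulmx1_unit.
have SE i l : S *m delta_mx i l = F i l *m S.
  rewrite /S mulmx_suml mulmx_sumr.
  rewrite (bigD1 i) //= big1 ?addr0; last first.
    by move=> j ji; rewrite -mulmxA mul_delta_mx_cond (negbTE ji) mulr0n mulmx0.
  rewrite [RHS](bigD1 l) //= big1 ?addr0; last first.
    move=> j jl; rewrite mulmxA FF.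
    have -> : (l == j) = false by rewrite eq_sym; exact: negbTE.
    by rewrite scale0r mul0mx.
  by rewrite -mulmxA mul_delta_mx mulmxA FF eqxx scale1r.
pose f X := \sum_i \sum_j X i j *: F i j.
have Sf X : S *m X = f X *m S.
  rewrite {1}(matrix_sum_delta X) mulmx_sumr /f mulmx_suml; apply: eq_bigr => i _.
  rewrite mulmx_sumr mulmx_suml; apply: eq_bigr => j _.
  by rewrite -scalemxAr SE scalemxAl.
have Rf X : Rel X (f X).
  rewrite {1}(matrix_sum_delta X); apply: Rel_sum => i _; apply: Rel_sum => j _.
  by apply: Rel_scale; exact: RE.
have inj Y : Rel 0 Y -> Y = 0.
  move=> hY; apply: tr_adj_eq0.
  have -> : adjmx Y = f (invmx S *m adjmx Y *m S).
    by rewrite -(mulmxK uS (f _)) -Sf !mulmxA mulmxV // mul1mx mulmxK.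
  rewrite /f mulmx_suml tr_sum big1 // => i _; rewrite mulmx_suml tr_sum big1 // => j _.
  by rewrite -scalemxAl mxtraceZ tr_ev_Rel0 ?mulr0.
exists S; split => // g.
have -> : r2 g = f (r1 g).
  apply/eqP; rewrite -subr_eq0; apply/eqP; apply: inj.
  by have := Rel_sub (Rel_r g) (Rf (r1 g)); rewrite subrr.
by rewrite -(mulmxK uS (f _)) -Sf.
Qed.

End Core.

Section Unitarize.
Variables (R : realType) (G : Type) (N : nat).
Local Notation C := R[i].
Variables (r1 : G -> 'M[C]_N.+1) (B : G -> Prop) (S : 'M[C]_N.+1).
Hypothesis uS : S \in unitmx.
Hypothesis hsp : spans_mx B r1.

Lemma unitarize :
  (forall b, B b -> (adjmx S *m S) *m r1 b = r1 b *m (adjmx S *m S)) ->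
  exists S' : 'M[C]_N.+1, unitary_mx S' /\
    forall X, S' *m X *m invmx S' = S *m X *m invmx S.
Proof.
move=> hc; set P := adjmx S *m S.
have hP : P = P 0 0 *: 1%:M.
  apply: comm_scalar => i j.
  have [k [g [c [hB ->]]]] := hsp (delta_mx i j).
  rewrite mulmx_sumr mulmx_suml; apply: eq_bigr => l _.
  by rewrite -scalemxAr -scalemxAl hc.
set c := P 0 0 in hP.
have c_ge0 : 0 <= c.
  rewrite /c /P mxE; apply: sumr_ge0 => l _.
  by rewrite adjmxE mulrC -normCK exprn_ge0.
have c_nz : c != 0.
  apply/eqP=> c0; move: uS; have -> : S = 0.
    apply: tr_adj_eq0; rewrite -/P hP c0 scale0r mxtrace0 //.
  by rewrite unitmxE det0 unitr0.
set a := (sqrtC c)^-1.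
have a_ge0 : 0 <= a by rewrite invr_ge0 sqrtC_ge0.
have a_nz : a != 0 by rewrite invr_eq0 sqrtC_eq0.
have h1 : adjmx (a *: S) *m (a *: S) = 1%:M.
  rewrite adjmxZ (geC0_conj a_ge0) -scalemxAl -scalemxAr scalerA -/P hP scalerA.
  rewrite -expr2 /a exprVn sqrtCK mulVf // scale1r //.
exists (a *: S); split; first by split => //; apply: mulmx1C.
have uaS : a *: S \in unitmx by case: (mulmx1_unit (mulmx1C h1)).
move=> X; rewrite invmxZ // -scalemxAl -scalemxAl -scalemxAr scalerA mulfV //.
by rewrite scale1r.
Qed.

Lemma adj_comm_herm b : hermitian_mx (r1 b) -> hermitian_mx (S *m r1 b *m invmx S) ->
  (adjmx S *m S) *m r1 b = r1 b *m (adjmx S *m S).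
Proof.
rewrite /hermitian_mx => h1 h2.
move: h2; rewrite !adjmx_mul h1 adjmx_inv // => e.
have uA : adjmx S \in unitmx.
  have : adjmx (invmx S) *m adjmx S = 1%:M by rewrite -adjmx_mul mulmxV // adjmx1.
  by case/mulmx1_unit.
have -> : adjmx S *m S *m r1 b = adjmx S *m (S *m r1 b *m invmx S) *m S.
  by rewrite -!mulmxA mulVmx // mulmx1.
by rewrite -e !mulmxA mulmxV // mul1mx.
Qed.

Lemma adj_comm_unit b : unitary_mx (r1 b) -> unitary_mx (S *m r1 b *m invmx S) ->
  (adjmx S *m S) *m r1 b = r1 b *m (adjmx S *m S).
Proof.
rewrite /unitary_mx => [[u1 u1']] [_ u2].
move: u2; rewrite !adjmx_mul adjmx_inv // => e.
have uA : adjmx S \in unitmx.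
  have : adjmx (invmx S) *m adjmx S = 1%:M by rewrite -adjmx_mul mulmxV // adjmx1.
  by case/mulmx1_unit.
have e2 : adjmx (r1 b) *m (adjmx S *m S) *m r1 b = adjmx S *m S.
  have := congr1 (fun M => adjmx S *m M *m S) e.
  rewrite mulmx1 !mulmxA mulmxV // mul1mx -!mulmxA mulVmx // mulmx1 !mulmxA //.
rewrite -{2}e2 !mulmxA u1 mul1mx //.
Qed.
End Unitarize.

Section Final.
Variables (R : realType) (d : nat) (w : R[i]) (P : polar_data d w).
Hypothesis pd : prime d.
Hypothesis pw : d.-primitive_root w.
Variable n : nat.

Lemma muE N (tau : 'cV['F_d]_n -> 'M[R[i]]_N) (g : gelem P n) :
  polar_mu tau g = gv g *: tau g.2.
Proof. by case: g => [[a p] x]. Qed.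

Definition e1 : gelem P n := mkg P 1 0.

Lemma gv_e1 : gv e1 = 1.
Proof. by rewrite gv_mk // oner_neq0. Qed.

Lemma bil0 (W : 'M['F_d]_n) : bil W 0 0 = 0.
Proof. by rewrite /bil mulmx0 mxE. Qed.

Lemma gmul_e1 (W : 'M['F_d]_n) : gmul W e1 e1 = e1.
Proof.
apply: g_inj => //; first by rewrite gv_mul // gv_e1 bil0 E0 !mulr1.
by rewrite gmul2 addr0.
Qed.

Lemma mu_unit N (W : 'M['F_d]_n) (tau : 'cV['F_d]_n -> 'M[R[i]]_N) (g : gelem P n) :
  polar_rep P W tau -> polar_mu tau g \in unitmx.
Proof.
case=> ut _ _; rewrite muE unitmxZ ?ut //.
by rewrite unitfE gv_nz.
Qed.

Lemma idem_unit N (Y : 'M[R[i]]_N) : Y \in unitmx -> Y = Y *m Y -> Y = 1%:M.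
Proof.
move=> uY e; by rewrite -[LHS]mul1mx -(mulVmx uY) -mulmxA -e mulVmx.
Qed.

Lemma mu_e1 N (W : 'M['F_d]_n) (tau : 'cV['F_d]_n -> 'M[R[i]]_N) :
  polar_rep P W tau -> polar_mu tau e1 = 1%:M.
Proof.
move=> rep; apply: idem_unit; first exact: mu_unit rep.
by case: rep => _ _ hom; rewrite -hom gmul_e1.
Qed.

Lemma inv_eq N (A X : 'M[R[i]]_N) : A *m X = 1%:M -> invmx A = X.
Proof.
move=> h; have [uA _] := mulmx1_unit h.
by rewrite -[LHS]mulmx1 -h mulmxA mulVmx // mul1mx.
Qed.


Lemma tau0 N (W : 'M['F_d]_n) (tau : 'cV['F_d]_n -> 'M[R[i]]_N) :
  polar_rep P W tau -> tau 0 = 1%:M.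
Proof. by move=> rep; rewrite -(mu_e1 rep) muE gv_e1 scale1r /e1 mk2. Qed.
End Final.

Theorem theorem2 (R : realType) (d n N1 N2 : nat) (w : R[i])
    (P : polar_data d w) (W1 W2 : 'M['F_d]_n)
    (tau1 : 'cV['F_d]_n -> 'M[R[i]]_N1) (tau2 : 'cV['F_d]_n -> 'M[R[i]]_N2) :
  prime d -> d.-primitive_root w ->
  polar_rep P W1 tau1 -> polar_rep P W2 tau2 ->
  \rank (W1 - W1^T) = n -> \rank (W2 - W2^T) = n ->
  (exists phi : gelem P n -> gelem P n, group_iso W1 W2 phi) /\
  (forall phi : gelem P n -> gelem P n, group_iso W1 W2 phi ->
     (forall g, \tr (polar_mu tau1 g) = \tr (polar_mu tau2 (phi g))) ->
     (forall B : gelem P n -> Prop,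
        spans_mx B (polar_mu tau1) ->
        (forall g, B g -> hermitian_mx (polar_mu tau1 g)) ->
        (forall g, B g -> hermitian_mx (polar_mu tau2 (phi g))) ->
        exists e : N1 = N2, exists S : 'M[R[i]]_N2,
          unitary_mx S /\
          forall g, polar_mu tau2 (phi g) =
                    S *m castmx (e, e) (polar_mu tau1 g) *m invmx S) /\
     (forall B : gelem P n -> Prop,
        spans_mx B (polar_mu tau1) ->
        (forall g, B g -> unitary_mx (polar_mu tau1 g)) ->
        (forall g, B g -> unitary_mx (polar_mu tau2 (phi g))) ->
        exists e : N1 = N2, exists S : 'M[R[i]]_N2,
          unitary_mx S /\
          forall g, polar_mu tau2 (phi g) =
                    S *m castmx (e, e) (polar_mu tau1 g) *m invmx S)).
Proof.
move=> pd pw rep1 rep2 rk1 rk2; split; first exact: (iso_exists P pd pw rk1 rk2).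
move=> phi [[psi phiK psiK] phom] htr.
have he1 := mu_e1 pd pw rep1.
have hm1 : forall g h : gelem P n, polar_mu tau1 (gmul W1 g h) = polar_mu tau1 g *m polar_mu tau1 h.
  by case: rep1.
have hm2 : forall g h : gelem P n, polar_mu tau2 (phi (gmul W1 g h)) =
    polar_mu tau2 (phi g) *m polar_mu tau2 (phi h).
  by move=> g h; rewrite phom; case: rep2 => _ _ ->.
have he2 : polar_mu tau2 (phi (e1 P n)) = 1%:M.
  apply: idem_unit; first exact: (mu_unit pd pw _ rep2).
  by rewrite -hm2 (gmul_e1 P pd pw).
have eN : N1 = N2.
  have := htr (e1 P n); rewrite he1 he2 !mxtrace1 => /eqP.
  by rewrite eqr_nat => /eqP.
subst N2.
case: N1 tau1 tau2 rep1 rep2 htr he1 he2 hm1 hm2 =>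
  [|N] tau1 tau2 rep1 rep2 htr he1 he2 hm1 hm2.
  split; move=> B _ _ _; exists erefl, 1%:M; split;
    try (by split; apply/matrixP => [[]]); by move=> g; apply/matrixP => [[]].
have hinv : forall g : gelem P n, sp2 (polar_mu tau2 \o phi) (invmx (polar_mu tau2 (phi g))).
  move=> g; set y := phi g; pose y' := mkg P 1 (- y.2).
  set c := gv (gmul W2 y y').
  have cnz : c != 0 by rewrite /c gv_nz.
  have hy : polar_mu tau2 y *m polar_mu tau2 y' = c *: 1%:M.
    have t0 := tau0 pd pw rep2; case: rep2 => [_ _ <-]; rewrite muE gmul2 /y' mk2 subrr.
    by rewrite t0.
  have -> : invmx (polar_mu tau2 y) = c^-1 *: polar_mu tau2 y'.
    by apply: inv_eq; rewrite -scalemxAr hy scalerA mulVf // scale1r.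
  apply: sp2_scale; rewrite -[y'](psiK); exact: (sp2_r (polar_mu tau2 \o phi) (psi y')).
have conj : forall B, spans_mx B (polar_mu tau1) ->
    (forall b, B b -> sp2 (polar_mu tau2 \o phi) (adjmx (polar_mu tau2 (phi b)))) ->
    exists S, S \in unitmx /\ forall g, polar_mu tau2 (phi g) = S *m polar_mu tau1 g *m invmx S.
  move=> B hsp hadj.
  exact: (@core_conj R (gelem P n) (gmul W1) N (polar_mu tau1) (polar_mu tau2 \o phi)
           (e1 P n) B hm1 hm2 he1 he2 htr hadj hsp).
split.
  move=> B hsp h1 h2.
  have [S [uS hS]] : exists S, S \in unitmx /\ forall g, polar_mu tau2 (phi g) = S *m polar_mu tau1 g *m invmx S.
    apply: conj => // b Bb; rewrite (h2 b Bb); exact: (sp2_r (polar_mu tau2 \o phi) b).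
  have [S' [uS' hS']] := unitarize uS hsp
    (fun b Bb => adj_comm_herm uS (h1 b Bb) (eq_ind _ _ (h2 b Bb) _ (hS b))).
  by exists erefl, S'; split => // g; rewrite castmx_id hS' hS.
move=> B hsp h1 h2.
have [S [uS hS]] : exists S, S \in unitmx /\ forall g, polar_mu tau2 (phi g) = S *m polar_mu tau1 g *m invmx S.
  apply: conj => // b Bb; rewrite -(inv_eq (h2 b Bb).1); exact: hinv.
have [S' [uS' hS']] := unitarize uS hsp
  (fun b Bb => adj_comm_unit uS (h1 b Bb) (eq_ind _ _ (h2 b Bb) _ (hS b))).
by exists erefl, S'; split => // g; rewrite castmx_id hS' hS.
Qed.
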